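(* Let $\alpha$ be irrational. Then, as $n\to\infty$, the Sós permutations $\beta_\alpha$ of $[n]$ satisfy $D(\beta_\alpha)=o(n)$; i.e., $\beta_\alpha$ is quasirandom.
   Context: $[n]=\{1,\dots,n\}$, identified with $\mathbb{Z}_n$; $\{x\}$ is the fractional part of $x$. For irrational $\alpha$, $\beta_\alpha$ is the permutation of $[n]$ with $\beta_\alpha(t)=|\{s\in[n]:\{\alpha s\}\le\{\alpha t\}\}|$. An interval of $\mathbb{Z}_n$ is any subset that is the image of an interval of consecutive integers under the projection $\mathbb{Z}\to\mathbb{Z}_n$ (wrap-around allowed). For $S,T\subseteq\mathbb{Z}_n$, $D_T(S)=\bigl|\,|S\cap T|-|S||T|/n\,\bigr|$, and for a permutation $\sigma$, $D(\sigma)=\max_{I,J}D_J(\sigma(I))$ over all intervals $I,J$. *)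

(* Defs.v *)
From HB Require Import structures.
From mathcomp Require Import all_boot all_order all_algebra.
From mathcomp Require Import reals.
Unset Printing Implicit Defensive.
Import Order.TTheory GRing.Theory Num.Theory.
Local Open Scope ring_scope.

Definition fracp {R : realType} (x : R) : R := x - (Num.floor x)%:~R.

(* Points of [n] = {1,...,n} are represented by i : 'I_n, standing for i+1.
   This is the identification [n] ~ Z_n via t |-> t - 1 (a translation of the
   identification t |-> t mod n, which does not change the family of intervals). *)

Definition sos_val {R : realType} (alpha : R) (n : nat) (i : 'I_n) : nat :=
  #|[set j : 'I_n | fracp (alpha * (j.+1)%:R) <= fracp (alpha * (i.+1)%:R)]|.

(* the Sos permutation as a map 'I_n -> 'I_n (value beta(t) - 1); the default
   of insubd is never used since 1 <= beta(t) <= n *)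
Definition sos_perm {R : realType} (alpha : R) (n : nat) (i : 'I_n) : 'I_n :=
  insubd i (sos_val alpha n i).-1.

Definition cint (n a len : nat) : {set 'I_n} :=
  [set x : 'I_n | [exists k : 'I_len, (x : nat) == ((a + k) %% n)%N]].

Definition Dset {R : realType} (n : nat) (S T : {set 'I_n}) : R :=
  `| (#|S :&: T|)%:R - (#|S|)%:R * (#|T|)%:R / n%:R |.

(* D(sigma) = max over intervals I, J of D_J(sigma(I)); every interval of Z_n
   equals some cint n a len with a < n and len <= n. *)
Definition Dperm {R : realType} (n : nat) (sigma : 'I_n -> 'I_n) : R :=
  \big[Num.max/0]_(a < n) \big[Num.max/0]_(l < n.+1)
   \big[Num.max/0]_(b < n) \big[Num.max/0]_(m < n.+1)
     Dset n (sigma @: cint n a l) (cint n b m).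

(* Main.v *)
Require Import Defs.
From HB Require Import structures.
From mathcomp Require Import all_boot all_order all_algebra.
From mathcomp Require Import reals.
From mathcomp Require Import ring lra zify.
Import Order.TTheory GRing.Theory Num.Theory.
Local Open Scope ring_scope.

Lemma fracp_ge0 {R : realType} (y : R) : 0 <= fracp y.
Proof. by rewrite /fracp subr_ge0 floor_le. Qed.

Lemma fracp_lt1 {R : realType} (y : R) : fracp y < 1.
Proof.
rewrite /fracp ltrBlDl; have := floorD1_gt y.
by rewrite intrD addrC.
Qed.

Lemma floor_addz {R : realType} (y : R) (z : int) :
  Num.floor (y + z%:~R) = Num.floor y + z.
Proof.
apply: floor_def; rewrite !intrD; have /andP[h1 h2] := floor_itv y.
rewrite intrD in h2; apply/andP; split; lra.
Qed.

Lemma fracp_addz {R : realType} (y : R) (z : int) :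
  fracp (y + z%:~R) = fracp y.
Proof. by rewrite /fracp floor_addz intrD; ring. Qed.

Lemma fracp_addr {R : realType} (y s : R) : 0 <= s ->
  fracp (y + s) <= fracp y + s.
Proof.
move=> s0; rewrite /fracp.
have : Num.floor y <= Num.floor (y + s) by apply: le_floor; lra.
rewrite -(ler_int R) => h; lra.
Qed.

Lemma ind_frac {R : realType} (y x : R) : 0 <= x <= 1 ->
  (((fracp y < x)%R : nat)%:R : R) = x + fracp (y - x) - fracp y.
Proof.
move=> /andP[x0 x1].
have /andP[h1 h2] := floor_itv y; rewrite intrD in h2.
rewrite /fracp; case: ltP => hx.
- have -> : Num.floor (y - x) = Num.floor y - 1.
    apply: floor_def; rewrite subrK intrB /=; rewrite /fracp in hx.
    apply/andP; split; lra.
  rewrite intrB /=; ring.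
- have -> : Num.floor (y - x) = Num.floor y.
    apply: floor_def; rewrite intrD /=; rewrite /fracp in hx.
    apply/andP; split; lra.
  rewrite /=; ring.
Qed.

Definition Tsum {R : realType} (a g : R) (L : nat) : R :=
  \sum_(0 <= k < L) fracp (g + k%:R * a).

Definition cnt {R : realType} (a g x : R) (L : nat) : R :=
  \sum_(0 <= k < L) (((fracp (g + k%:R * a) < x)%R : nat)%:R : R).

Lemma cntE {R : realType} (a g x : R) L : 0 <= x <= 1 ->
  cnt a g x L = L%:R * x + Tsum a (g - x) L - Tsum a g L.
Proof.
move=> hx; rewrite /cnt /Tsum.
rewrite (eq_bigr (fun k => x + fracp ((g - x) + k%:R * a) - fracp (g + k%:R * a))).
  by rewrite sumrB big_split /= sumr_const_nat subn0 mulr_natl.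
move=> k _; rewrite ind_frac //; congr (_ + fracp _ - _); ring.
Qed.

Lemma Tsum_addz {R : realType} (a g : R) (z : int) L :
  Tsum a (g + z%:~R) L = Tsum a g L.
Proof.
apply: eq_bigr => k _.
by rewrite -[RHS](fracp_addz _ z); congr fracp; ring.
Qed.

Lemma Tsum_ge0 {R : realType} (a g : R) m n :
  0 <= \sum_(m <= k < n) fracp (g + k%:R * a).
Proof. by apply: sumr_ge0 => k _; apply: fracp_ge0. Qed.

Lemma Tsum_leq {R : realType} (a g : R) m n :
  \sum_(m <= k < n) fracp (g + k%:R * a) <= (n - m)%:R.
Proof.
rewrite -[X in _ <= X]mulr1n -sumr_const_nat.
by apply: ler_sum => k _; apply/ltW/fracp_lt1.
Qed.

Lemma Tsum_shift {R : realType} (a g : R) (q L : nat) :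
  Tsum a (g + q%:R * a) L =
  \sum_(q <= k < L + q) fracp (g + k%:R * a).
Proof.
rewrite /Tsum -{2}[q]add0n big_addn addnK.
by apply: eq_bigr => k _; congr fracp; rewrite natrD; ring.
Qed.

Lemma Tsum_shift_le {R : realType} (a g : R) (q L : nat) :
  Tsum a (g + q%:R * a) L <= Tsum a g L + q%:R.
Proof.
rewrite Tsum_shift.
have e1 : \sum_(0 <= k < L + q) fracp (g + k%:R * a) =
  \sum_(0 <= k < q) fracp (g + k%:R * a) + \sum_(q <= k < L + q) fracp (g + k%:R * a).
  by rewrite (big_cat_nat (leq0n q) (leq_addl L q)).
have e2 : \sum_(0 <= k < L + q) fracp (g + k%:R * a) =
  \sum_(0 <= k < L) fracp (g + k%:R * a) + \sum_(L <= k < L + q) fracp (g + k%:R * a).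
  by rewrite (big_cat_nat (leq0n L) (leq_addr q L)).
have := Tsum_ge0 a g 0 q; have := Tsum_leq a g L (L + q).
rewrite addKn /Tsum; lra.
Qed.

Lemma Tsum_shift_ge {R : realType} (a g : R) (q L : nat) :
  Tsum a g L <= Tsum a (g + q%:R * a) L + q%:R.
Proof.
rewrite Tsum_shift.
have e1 : \sum_(0 <= k < L + q) fracp (g + k%:R * a) =
  \sum_(0 <= k < q) fracp (g + k%:R * a) + \sum_(q <= k < L + q) fracp (g + k%:R * a).
  by rewrite (big_cat_nat (leq0n q) (leq_addl L q)).
have e2 : \sum_(0 <= k < L + q) fracp (g + k%:R * a) =
  \sum_(0 <= k < L) fracp (g + k%:R * a) + \sum_(L <= k < L + q) fracp (g + k%:R * a).
  by rewrite (big_cat_nat (leq0n L) (leq_addr q L)).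
have := Tsum_ge0 a g L (L + q); have := Tsum_leq a g 0 q.
rewrite subn0 /Tsum; lra.
Qed.

Lemma Tsum_addr {R : realType} (a g s : R) L : 0 <= s ->
  Tsum a (g + s) L <= Tsum a g L + L%:R * s.
Proof.
move=> s0; rewrite /Tsum.
apply: (@le_trans _ _ (\sum_(0 <= k < L) (fracp (g + k%:R * a) + s))).
  apply: ler_sum => k _.
  rewrite (_ : g + s + k%:R * a = (g + k%:R * a) + s); last ring.
  exact: fracp_addr.
by rewrite big_split /= sumr_const_nat subn0 mulr_natl.
Qed.

Lemma dir_aux {R : realType} {a : R} (irr : forall q : rat, a != ratr q) {d : R}
  {k1 k2 : nat} : (k1 < k2)%N ->
  `|fracp (k2%:R * a) - fracp (k1%:R * a)| < d ->
  exists (q : nat) (p : int), 0 < `|q%:R * a - p%:~R| < d.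
Proof.
move=> hk hd; exists (k2 - k1)%N, (Num.floor (k2%:R * a) - Num.floor (k1%:R * a)).
have E : (k2 - k1)%:R * a - (Num.floor (k2%:R * a) - Num.floor (k1%:R * a))%:~R
   = fracp (k2%:R * a) - fracp (k1%:R * a).
  by rewrite natrB ?(ltnW hk) // intrB /fracp; ring.
rewrite E hd andbT normr_gt0; apply/negP => /eqP h0.
have hq : (k2 - k1)%:R != 0 :> R by rewrite pnatr_eq0 subn_eq0 -ltnNge.
move: h0; rewrite -E => /eqP; rewrite subr_eq0 => /eqP h1.
have := irr ((Num.floor (k2%:R * a) - Num.floor (k1%:R * a))%:~R / (k2 - k1)%:R).
rewrite fmorph_div rmorph_int rmorph_nat -h1 mulrC mulKf //.
by rewrite eqxx.
Qed.

Lemma dirichlet {R : realType} (a : R) (irr : forall q : rat, a != ratr q) (d : R) :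
  0 < d -> exists (q : nat) (p : int), 0 < `|q%:R * a - p%:~R| < d.
Proof.
move=> d0.
pose K := (Num.truncn (d^-1)).+1.
have HK : d^-1 < K%:R by apply: truncnS_gt.
have K0 : 0 < K%:R :> R by rewrite ltr0n.
have binP : forall k : 'I_K.+1, (Num.truncn (K%:R * fracp (k%:R * a)) < K)%N.
  move=> k; rewrite truncn_lt_nat.
    by rewrite -[X in _ < X]mulr1 ltr_pM2l // fracp_lt1.
  by apply: mulr_ge0; [exact: ltW | exact: fracp_ge0].
pose bin k := Ordinal (binP k).
have : ~~ injectiveb bin.
  by apply/injectiveP => /leq_card; rewrite !card_ord ltnn.
case/injectivePn => k1 [k2 hne heq].
have heq' : Num.truncn (K%:R * fracp (k1%:R * a)) =
            Num.truncn (K%:R * fracp (k2%:R * a)) by move: heq => /(congr1 val).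
have hd : `|fracp (k2%:R * a) - fracp (k1%:R * a)| < d.
  have /andP[u1 u2] := truncn_itv (mulr_ge0 (ltW K0) (fracp_ge0 (k1%:R * a))).
  have /andP[v1 v2] := truncn_itv (mulr_ge0 (ltW K0) (fracp_ge0 (k2%:R * a))).
  rewrite heq' in u1 u2.
  set t := Num.truncn _ in u1 u2 v1 v2.
  rewrite -natr1 in u2 v2.
  have hK : K%:R * `|fracp (k2%:R * a) - fracp (k1%:R * a)| < 1.
    rewrite -[K%:R]ger0_norm ?ltW // -normrM ltr_norml; apply/andP; split; lra.
  have : `|fracp (k2%:R * a) - fracp (k1%:R * a)| < K%:R^-1.
    by rewrite -[K%:R^-1]mul1r ltr_pdivlMr // mulrC.
  move=> h; apply: (lt_le_trans h).
  rewrite -[d]invrK lef_pV2 ?ltW // ?posrE ?invr_gt0 //.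
case: (ltngtP k1 k2) => hk.
- exact: (dir_aux irr hk hd).
- by apply: (dir_aux irr hk); rewrite distrC.
- by move: hne; rewrite (val_inj hk) eqxx.
Qed.

Lemma Tsum_iter {R : realType} (a h : R) (q L : nat) :
  (forall y, Tsum a (y + h) L <= Tsum a y L + q%:R) ->
  forall (j : nat) y, Tsum a (y + j%:R * h) L <= Tsum a y L + j%:R * q%:R.
Proof.
move=> st; elim=> [|j IH] y; first by rewrite !mul0r !addr0.
have := st (y + j%:R * h); have := IH y.
rewrite (_ : y + j%:R * h + h = y + j.+1%:R * h); last by rewrite -natr1; ring.
rewrite -natr1; lra.
Qed.

Lemma Tsum_cover {R : realType} (a h : R) (q L : nat) : 0 < h ->
  (forall y, Tsum a (y + h) L <= Tsum a y L + q%:R) ->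
  forall g g', Tsum a g' L <= Tsum a g L + q%:R / h + L%:R * h.
Proof.
move=> h0 st g g'.
set d := g' - g.
set j := Num.truncn (fracp d / h).
have f0 := fracp_ge0 d; have f1 := fracp_lt1 d.
have dh0 : 0 <= fracp d / h by apply: divr_ge0 => //; apply: ltW.
have hj1 : j%:R * h <= fracp d.
  by rewrite -ler_pdivlMr // truncn_le.
have hj2 : fracp d < j%:R * h + h.
  rewrite (_ : j%:R * h + h = j.+1%:R * h); last by rewrite -natr1; ring.
  by rewrite -ltr_pdivrMr //; apply: truncnS_gt.
set s := fracp d - j%:R * h.
have eg : g' = g + j%:R * h + s + (Num.floor d)%:~R.
  by rewrite /s /fracp /d; ring.
rewrite eg Tsum_addz.
have h1 : Tsum a (g + j%:R * h + s) L <= Tsum a (g + j%:R * h) L + L%:R * s.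
  by apply: Tsum_addr; rewrite /s subr_ge0.
have h2 := Tsum_iter _ _ _ _ st j g.
have h3 : j%:R * q%:R <= q%:R / h.
  rewrite ler_pdivlMr //.
  have : j%:R * h <= 1 by lra.
  have : 0 <= q%:R :> R by [].
  nra.
have h4 : L%:R * s <= L%:R * h.
  by rewrite ler_wpM2l // /s; lra.
lra.
Qed.

Lemma UD {R : realType} (a : R) (irr : forall q : rat, a != ratr q) (e : R) :
  0 < e -> exists N : nat, forall L g x, (N <= L)%N -> 0 <= x <= 1 ->
  `|cnt a g x L - L%:R * x| <= e * L%:R.
Proof.
move=> e0.
have e2 : 0 < e / 2 by lra.
have [q [p /andP[hp0 hpe]]] := dirichlet a irr _ e2.
set h := `|q%:R * a - p%:~R| in hp0 hpe.
have st : forall L y, Tsum a (y + h) L <= Tsum a y L + q%:R.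
  move=> L y; rewrite /h; case: (lerP 0 (q%:R * a - p%:~R)) => hs.
  - rewrite ger0_norm //.
    rewrite (_ : y + (q%:R * a - p%:~R) = (y + q%:R * a) + (- p)%:~R);
      last by rewrite intrN; ring.
    by rewrite Tsum_addz Tsum_shift_le.
  - rewrite ltr0_norm //.
    have := Tsum_shift_ge a (y - (q%:R * a - p%:~R)) q L.
    rewrite (_ : y - (q%:R * a - p%:~R) + q%:R * a = y + p%:~R); last by ring.
    by rewrite Tsum_addz; lra.
pose r := 2 * q%:R / (h * e).
exists (Num.truncn r).+1 => L g x hL hx.
have hr : r < L%:R.
  by apply: (lt_le_trans (truncnS_gt r)); rewrite ler_nat.
have hqh : q%:R / h <= e * L%:R / 2.
  have -> : q%:R / h = r * e / 2.
    by rewrite /r; field; rewrite !gt_eqF.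
  have : r * e <= L%:R * e by rewrite ler_pM2r // ltW.
  lra.
have hLh : L%:R * h <= e * L%:R / 2.
  have : 0 <= L%:R :> R by [].
  nra.
rewrite cntE // (_ : L%:R * x + Tsum a (g - x) L - Tsum a g L - L%:R * x =
   Tsum a (g - x) L - Tsum a g L); last by ring.
have c1 := Tsum_cover a h q L hp0 (st L) g (g - x).
have c2 := Tsum_cover a h q L hp0 (st L) (g - x) g.
rewrite ler_norml; apply/andP; split; lra.
Qed.

Lemma frac_inj {R : realType} {a : R} (irr : forall q : rat, a != ratr q) (i j : nat) :
  fracp (a * i.+1%:R) = fracp (a * j.+1%:R) -> i = j.
Proof.
wlog hij : i j / (i <= j)%N.
  move=> W h; case: (leqP i j) => hh; first exact: W.
  by symmetry; apply: W; [exact: ltnW|].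
move=> h; apply/eqP; rewrite eqn_leq hij /= leqNgt; apply/negP => hlt.
have hq : (j - i)%:R != 0 :> R by rewrite pnatr_eq0 subn_eq0 -ltnNge.
have h1 : (j - i)%:R * a = (Num.floor (a * j.+1%:R) - Num.floor (a * i.+1%:R))%:~R.
  move: h; rewrite /fracp natrB ?(ltnW hlt) // intrB -!natr1 => h; lra.
have := irr ((Num.floor (a * j.+1%:R) - Num.floor (a * i.+1%:R))%:~R / (j - i)%:R).
by rewrite fmorph_div rmorph_int rmorph_nat -h1 mulrC mulKf // eqxx.
Qed.

Definition fv {R : realType} (a : R) {n : nat} (t : 'I_n) : R := fracp (a * t.+1%:R).

Definition rho {R : realType} (a : R) {n : nat} (t : 'I_n) : nat :=
  #|[set j : 'I_n | fv a j < fv a t]|.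

Lemma sos_valE {R : realType} (a : R) (irr : forall q : rat, a != ratr q) n (i : 'I_n) :
  sos_val a n i = (rho a i).+1.
Proof.
rewrite /sos_val /rho.
have -> : [set j : 'I_n | fracp (a * j.+1%:R) <= fracp (a * i.+1%:R)] =
          i |: [set j : 'I_n | fv a j < fv a i].
  apply/setP => j; rewrite !inE le_eqVlt /fv; congr (_ || _).
  apply/eqP/eqP => [h|->//]; apply: val_inj; exact: (frac_inj irr _ _ h).
by rewrite cardsU1 inE ltxx.
Qed.

Lemma rho_lt {R : realType} (a : R) (irr : forall q : rat, a != ratr q) n (i : 'I_n) :
  (rho a i < n)%N.
Proof.
have := max_card [set j : 'I_n | fracp (a * j.+1%:R) <= fracp (a * i.+1%:R)].
by rewrite card_ord -/(sos_val a n i) sos_valE.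
Qed.

Lemma sos_permE {R : realType} (a : R) (irr : forall q : rat, a != ratr q) n (i : 'I_n) :
  val (sos_perm a n i) = rho a i.
Proof. by rewrite /sos_perm val_insubd sos_valE //= rho_lt. Qed.

Lemma rho_mono {R : realType} (a : R) {n} {i j : 'I_n} : fv a i < fv a j ->
  (rho a i < rho a j)%N.
Proof.
move=> h; rewrite /rho; apply: proper_card; apply/properP; split.
  apply/subsetP => k; rewrite !inE => hk; exact: lt_trans hk h.
by exists i; rewrite !inE ?h ?ltxx.
Qed.

Lemma sos_inj {R : realType} (a : R) (irr : forall q : rat, a != ratr q) n :
  injective (sos_perm a n).
Proof.
move=> i j /(congr1 val); rewrite !sos_permE // => h.
case: (ltgtP (fv a i) (fv a j)) => hf.
- by have := rho_mono a hf; rewrite h ltnn.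
- by have := rho_mono a hf; rewrite h ltnn.
- by apply: val_inj; apply: (frac_inj irr _ _ hf).
Qed.

Definition ind (R : realType) (u x : nat) : R := (((x < u)%N : nat)%:R).

Definition Qc {R : realType} (a : R) (n u v : nat) : R :=
  \sum_(t : 'I_n) ind R u t * ind R v (rho a t).

Lemma sum_ind_prefix {R : realType} (F : nat -> R) n u : (u <= n)%N ->
  \sum_(t : 'I_n) ind R u t * F t = \sum_(0 <= k < u) F k.
Proof.
move=> hu; rewrite big_mkord (big_ord_widen n F hu) [RHS]big_mkcond /=.
by apply: eq_bigr => t _; rewrite /ind; case: ltnP; rewrite ?mul1r ?mul0r.
Qed.

Lemma cnt_ge0 {R : realType} (a g x : R) L : 0 <= cnt a g x L.
Proof. by apply: sumr_ge0 => k _; rewrite ler0n. Qed.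

Lemma cnt_leL {R : realType} (a g x : R) L : cnt a g x L <= L%:R.
Proof.
apply: (@le_trans _ _ (\sum_(0 <= k < L) (1 : R))).
  by apply: ler_sum => k _; case: (_ < _)%R.
by rewrite sumr_const_nat subn0.
Qed.

Lemma card_setR {R : realType} (T : finType) (P : pred T) :
  (#|[set x | P x]|%:R : R) = \sum_x ((P x : nat)%:R).
Proof.
rewrite -sum1_card natr_sum big_mkcond /=.
by apply: eq_bigr => x _; rewrite inE; case: (P x).
Qed.

Lemma rhoR {R : realType} (a : R) n (t : 'I_n) :
  ((rho a t)%:R : R) = cnt a a (fv a t) n.
Proof.
rewrite /rho card_setR /cnt big_mkord; apply: eq_bigr => j _.
by rewrite /fv -natr1; congr (((fracp _ < _)%R : nat)%:R); ring.
Qed.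

Lemma Qc_est {R : realType} (a : R) (irr : forall q : rat, a != ratr q) (e : R) :
  0 < e -> exists N : nat, forall n u v, (N <= n)%N -> (u <= n)%N -> (v <= n)%N ->
  `|Qc a n u v - u%:R * v%:R / n%:R| <= e * n%:R.
Proof.
move=> e0.
have e1 : 0 < e / 2 by lra.
have [N0 HN0] := UD a irr _ e1.
pose N := (maxn N0 (Num.truncn (N0%:R / (e / 2))).+1).
exists N => n u v hn hu hv.
have hN0 : (N0 <= n)%N by apply: leq_trans hn; rewrite leq_maxl.
have hN1 : N0%:R <= e / 2 * n%:R.
  have h1 : N0%:R / (e / 2) < n%:R.
    apply: (lt_le_trans (truncnS_gt _)); rewrite ler_nat.
    by apply: leq_trans hn; rewrite leq_maxr.
  by rewrite mulrC -ler_pdivrMr //; apply: ltW.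
have n0 : 0 < n%:R :> R.
  rewrite ltr0n; apply: leq_trans hn; rewrite leq_max; apply/orP; right; done.
have hrho : forall t : 'I_n, `|(rho a t)%:R - n%:R * fv a t| <= e / 2 * n%:R.
  move=> t; rewrite rhoR; apply: HN0 => //.
  by rewrite /fv fracp_ge0 ltW // fracp_lt1.
have hun : u%:R <= n%:R :> R by rewrite ler_nat.
have hvn : v%:R <= n%:R :> R by rewrite ler_nat.
have u0 : 0 <= u%:R :> R by [].
have clo : forall x, x <= 1 -> u%:R * x - e / 2 * n%:R <= cnt a a x u.
  move=> x x1; have c0 := cnt_ge0 a a x u.
  case: (ltP x 0) => hx0.
    have : u%:R * x <= 0 by apply: mulr_ge0_le0 => //; exact: ltW.
    have : 0 <= e / 2 * n%:R by apply: mulr_ge0; lra.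
    lra.
  case: (ltnP u N0) => hu0.
    have : u%:R * x <= u%:R by rewrite ler_piMr.
    have : u%:R <= N0%:R :> R by rewrite ler_nat ltnW.
    lra.
  have := HN0 u a x hu0 (_ : 0 <= x <= 1); rewrite hx0 x1 => /(_ isT).
  rewrite ler_norml => /andP[h1 h2].
  have : e * u%:R <= e * n%:R by rewrite ler_pM2l.
  lra.
have chi : forall x, 0 <= x -> cnt a a x u <= u%:R * x + e / 2 * n%:R.
  move=> x x0; have c0 := cnt_leL a a x u.
  case: (ltP 1 x) => hx1.
    have : u%:R <= u%:R * x by rewrite ler_peMr // ltW.
    have : 0 <= e / 2 * n%:R by apply: mulr_ge0; lra.
    lra.
  case: (ltnP u N0) => hu0.
    have : 0 <= u%:R * x by apply: mulr_ge0.
    have : u%:R <= N0%:R :> R by rewrite ler_nat ltnW.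
    lra.
  have := HN0 u a x hu0 (_ : 0 <= x <= 1); rewrite hx1 x0 => /(_ isT).
  rewrite ler_norml => /andP[h1 h2].
  have : e * u%:R <= e * n%:R by rewrite ler_pM2l.
  lra.
set x1 := (v%:R - e / 2 * n%:R) / n%:R.
set x2 := (v%:R + e / 2 * n%:R) / n%:R.
have nn0 : n%:R != 0 :> R by rewrite gt_eqF.
have ef : forall t : 'I_n, fracp (a + t%:R * a) = fv a t.
  by move=> t; rewrite /fv -natr1; congr fracp; ring.
have Qlo : cnt a a x1 u <= Qc a n u v.
  rewrite /cnt -(sum_ind_prefix _ n u hu); apply: ler_sum => t _.
  apply: ler_wpM2l; first by rewrite /ind ler0n.
  rewrite ef /ind; case: (boolP (fv a t < x1)) => hf /=; last by rewrite ler0n.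
  have hrv : (rho a t < v)%N.
    rewrite -(ltr_nat R).
    have := hrho t; rewrite ler_norml => /andP[_ h2].
    have : n%:R * fv a t < n%:R * x1 by rewrite ltr_pM2l.
    have -> : n%:R * x1 = v%:R - e / 2 * n%:R by rewrite /x1 mulrC divfK.
    lra.
  by rewrite hrv.
have Qhi : Qc a n u v <= cnt a a x2 u.
  rewrite /cnt -(sum_ind_prefix _ n u hu); apply: ler_sum => t _.
  apply: ler_wpM2l; first by rewrite /ind ler0n.
  rewrite ef /ind; case: (boolP (rho a t < v)%N) => hf /=; last by rewrite ler0n.
  have hrv : fv a t < x2.
    rewrite -(ltr_pM2l n0).
    have -> : n%:R * x2 = v%:R + e / 2 * n%:R by rewrite /x2 mulrC divfK.
    have := hrho t; rewrite ler_norml => /andP[h1 _].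
    move: hf; rewrite -(ltr_nat R) => hf.
    lra.
  by rewrite hrv.
have x11 : x1 <= 1.
  rewrite /x1 ler_pdivrMr // mul1r.
  have : 0 <= e / 2 * n%:R by apply: mulr_ge0; lra.
  lra.
have x20 : 0 <= x2.
  rewrite /x2; apply: divr_ge0 => //; apply: addr_ge0 => //.
  by apply: mulr_ge0; lra.
have ex1 : u%:R * x1 = u%:R * v%:R / n%:R - e / 2 * u%:R.
  by rewrite /x1; field.
have ex2 : u%:R * x2 = u%:R * v%:R / n%:R + e / 2 * u%:R.
  by rewrite /x2; field.
have h1 := clo x1 x11; have h2 := chi x2 x20.
have h3 : e / 2 * u%:R <= e / 2 * n%:R by rewrite ler_pM2l.
rewrite ler_norml; apply/andP; split; lra.
Qed.


Lemma mod_two (y n : nat) : (y < n + n)%N ->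
  (y %% n = if y < n then y else y - n)%N.
Proof.
move=> h; case: ltnP => h2; first by rewrite modn_small.
have -> : y = (y - n + n)%N by rewrite subnK.
by rewrite modnDr modn_small ?addnK //; lia.
Qed.

Lemma cint_mem (n a l x : nat) (hx : (x < n)%N) : (a < n)%N -> (l <= n)%N ->
  ((Ordinal hx) \in cint n a l) =
  if (a + l <= n)%N then (a <= x)%N && (x < a + l)%N
  else (a <= x)%N || (x < a + l - n)%N.
Proof.
move=> ha hl; rewrite inE; apply/existsP/idP.
- case=> k /eqP /= ->; have hk := ltn_ord k.
  rewrite mod_two; last by lia.
  by case: ifP => h1; case: ifP => h2; lia.
- case: ifP => h1 h2.
  + have hk : (x - a < l)%N by lia.
    exists (Ordinal hk); apply/eqP => /=; rewrite modn_small; lia.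
  + case: (leqP a x) => h3.
    * have hk : (x - a < l)%N by lia.
      exists (Ordinal hk); apply/eqP => /=; rewrite modn_small; lia.
    * have hk : (x + n - a < l)%N by lia.
      exists (Ordinal hk); apply/eqP => /=; rewrite mod_two; [|lia].
      case: ifP; lia.
Qed.

Lemma cint_ind {R : realType} (n a l : nat) (t : 'I_n) : (a < n)%N -> (l <= n)%N ->
  ((((t \in cint n a l) : nat)%:R) : R) =
  ind R (minn (a + l) n) t - ind R a t + ind R (a + l - n) t.
Proof.
case: t => x hx ha hl; rewrite cint_mem //= /ind.
case: (leqP (a + l) n) => h1; case: (leqP a x) => h2;
  case: (ltnP x (a + l)) => h3; case: (ltnP x (a + l - n)) => h4;
  case: (ltnP x (minn (a + l) n)) => h5; try (exfalso; lia);
  rewrite /= ?hx ?(mulr1n, mulr0n); ring.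
Qed.

Lemma sum_ind {R : realType} (n u : nat) : (u <= n)%N ->
  \sum_(t : 'I_n) ind R u t = u%:R.
Proof.
move=> hu; have := sum_ind_prefix (fun _ => (1 : R)) n u hu.
rewrite (eq_bigr (fun t : 'I_n => ind R u t)) => [->|t _]; last by rewrite mulr1.
by rewrite sumr_const_nat subn0.
Qed.

Lemma card_setR' {R : realType} (T : finType) (S : {set T}) :
  (#|S|%:R : R) = \sum_x (((x \in S) : nat)%:R).
Proof.
rewrite -sum1_card natr_sum big_mkcond /=.
by apply: eq_bigr => x _; case: (x \in S).
Qed.

Lemma Dset_bound {R : realType} (a : R) (irr : forall q : rat, a != ratr q) n (E : R)
  (HE : forall u v, (u <= n)%N -> (v <= n)%N ->
     `|Qc a n u v - u%:R * v%:R / n%:R| <= E)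
  (a0 l b m : nat) : (a0 < n)%N -> (l <= n)%N -> (b < n)%N -> (m <= n)%N ->
  Dset n (sos_perm a n @: cint n a0 l) (cint n b m) <= 9 * E.
Proof.
move=> ha hl hb hm.
have inj := sos_inj a irr n.
set A := cint n a0 l; set B := cint n b m.
set u1 := minn (a0 + l) n; set u2 := a0; set u3 := (a0 + l - n)%N.
set v1 := minn (b + m) n; set v2 := b; set v3 := (b + m - n)%N.
have hu1 : (u1 <= n)%N by rewrite geq_minr.
have hu2 : (u2 <= n)%N by rewrite ltnW.
have hu3 : (u3 <= n)%N by rewrite /u3; lia.
have hv1 : (v1 <= n)%N by rewrite geq_minr.
have hv2 : (v2 <= n)%N by rewrite ltnW.
have hv3 : (v3 <= n)%N by rewrite /v3; lia.
have hA : (#|A|%:R : R) = u1%:R - u2%:R + u3%:R.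
  rewrite card_setR' (eq_bigr (fun t : 'I_n => ind R u1 t - ind R u2 t + ind R u3 t)).
    by rewrite big_split sumrB /= !sum_ind.
  by move=> t _; rewrite cint_ind.
have hB : (#|B|%:R : R) = v1%:R - v2%:R + v3%:R.
  rewrite card_setR' (eq_bigr (fun t : 'I_n => ind R v1 t - ind R v2 t + ind R v3 t)).
    by rewrite big_split sumrB /= !sum_ind.
  by move=> t _; rewrite cint_ind.
have hSA : #|sos_perm a n @: A| = #|A| by rewrite card_imset.
have hC : (#|sos_perm a n @: A :&: B|%:R : R) =
  \sum_(t : 'I_n) (ind R u1 t - ind R u2 t + ind R u3 t) *
     (ind R v1 (rho a t) - ind R v2 (rho a t) + ind R v3 (rho a t)).
  rewrite card_setR' (reindex_inj inj) /=; apply: eq_bigr => t _.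
  rewrite -cint_ind // -sos_permE // -cint_ind //.
  rewrite inE mem_imset //.
  by rewrite /A /B; case: (t \in cint n a0 l); case: (_ \in cint n b m);
    rewrite /= ?mul1r ?mul0r.
pose Q u v := Qc a n u v.
have hC2 : (#|sos_perm a n @: A :&: B|%:R : R) =
  Q u1 v1 - Q u1 v2 + Q u1 v3 - Q u2 v1 + Q u2 v2 - Q u2 v3
  + Q u3 v1 - Q u3 v2 + Q u3 v3.
  rewrite hC /Q /Qc.
  do 8 (rewrite -sumrB || rewrite -big_split).
  by apply: eq_bigr => t _; rewrite /=; ring.
have := HE _ _ hu1 hv1; have := HE _ _ hu1 hv2; have := HE _ _ hu1 hv3.
have := HE _ _ hu2 hv1; have := HE _ _ hu2 hv2; have := HE _ _ hu2 hv3.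
have := HE _ _ hu3 hv1; have := HE _ _ hu3 hv2; have := HE _ _ hu3 hv3.
rewrite !ler_norml /Dset hSA hC2 hA hB -/(Q _ _).
have -> : (u1%:R - u2%:R + u3%:R) * (v1%:R - v2%:R + v3%:R) / n%:R =
  u1%:R * v1%:R / n%:R - u1%:R * v2%:R / n%:R + u1%:R * v3%:R / n%:R
  - u2%:R * v1%:R / n%:R + u2%:R * v2%:R / n%:R - u2%:R * v3%:R / n%:R
  + u3%:R * v1%:R / n%:R - u3%:R * v2%:R / n%:R + u3%:R * v3%:R / n%:R :> R.
  by rewrite /=; ring.
rewrite /Q.
move=> /andP[? ?] /andP[? ?] /andP[? ?] /andP[? ?] /andP[? ?] /andP[? ?]
  /andP[? ?] /andP[? ?] /andP[? ?].
apply/andP; split; lra.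
Qed.

Theorem mainTheorem12 (R : realType) (alpha : R)
  (irr : forall q : rat, alpha != ratr q) :
  forall eps : R, 0 < eps ->
  exists N : nat, forall n : nat, (N <= n)%N ->
    Dperm n (sos_perm alpha n) <= eps * n%:R.
Proof.
move=> eps e0.
have e9 : 0 < eps / 9 by lra.
have [N HN] := Qc_est alpha irr _ e9.
exists N => n hn.
have hE : 9 * (eps / 9 * n%:R) = eps * n%:R by field.
have b0 : 0 <= eps * n%:R by apply: mulr_ge0 => //; apply: ltW.
rewrite /Dperm.
apply: bigmax_le => // a0 _.
apply: bigmax_le => // l _.
apply: bigmax_le => // b _.
apply: bigmax_le => // m _.
rewrite -hE; apply: (Dset_bound alpha irr) => //.
- by move=> u v hu hv; apply: HN.
- by rewrite -ltnS.
- by rewrite -ltnS.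
Qed.
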